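(* Let $a>0$ and $0\le\rho<1$. There exists a constant $c=c(a,\rho)>0$ such that every probability measure $\nu$ on $\mathbb{Z}$ with $m_1(\nu)=\sum_k|k|\nu(k)\le a$ and $\nu(\beta\mathbb{Z}+r)\le\rho$ for all integers $\beta\notin\{1,-1\}$ and all $r\in\mathbb{Z}$ (with $0\cdot\mathbb{Z}+r=\{r\}$) satisfies $|\hat{\nu}(t)|\le e^{-ct^2}$ for all $t\in(-1/2,1/2]$.
   Context: The Fourier transform of a probability measure $\nu$ on $\mathbb{Z}$ is $\hat{\nu}(t)=\sum_{k\in\mathbb{Z}}\nu(k)e^{2\pi ikt}$. *)

(* Defs.v *)
From Stdlib Require Import Reals ZArith Znumtheory.
Open Scope R_scope.

Definition zpartial (f : Z -> R) (N : nat) : R :=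
  sum_f_R0 (fun n => f (Z.of_nat n - Z.of_nat N)%Z) (2 * N).

(* f is summable over Z with sum l (limit of symmetric partial sums; all
   series used below have nonnegative or absolutely summable terms). *)
Definition has_zsum (f : Z -> R) (l : R) : Prop := Un_cv (zpartial f) l.

Definition prob_measure_Z (nu : Z -> R) : Prop :=
  (forall k, 0 <= nu k) /\ has_zsum nu 1.

(* indicator-weighted mass function of the coset  beta Z + r
   (for beta = 0, Z.divide 0 (k - r) <-> k = r, i.e. the set {r}). *)
Definition coset_restrict (nu : Z -> R) (beta r : Z) : Z -> R :=
  fun k => if Zdivide_dec beta (k - r) then nu k else 0.

Definition coset_mass (nu : Z -> R) (beta r : Z) (m : R) : Prop :=
  has_zsum (coset_restrict nu beta r) m.

Definition first_moment (nu : Z -> R) (m : R) : Prop :=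
  has_zsum (fun k => Rabs (IZR k) * nu k) m.

(* real and imaginary parts of  hat nu(t) = sum_k nu(k) e^{2 pi i k t} *)
Definition fourier_re (nu : Z -> R) (t : R) : Z -> R :=
  fun k => nu k * cos (2 * PI * IZR k * t).
Definition fourier_im (nu : Z -> R) (t : R) : Z -> R :=
  fun k => nu k * sin (2 * PI * IZR k * t).

(* Main.v *)
Require Import Defs.
From Stdlib Require Import Reals ZArith Znumtheory Lra Lia Psatz Classical.
Open Scope R_scope.


Lemma zpartial_S f N :
  zpartial f (S N) = zpartial f N + f (Z.of_nat (S N)) + f (- Z.of_nat (S N))%Z.
Proof.
  unfold zpartial.
  replace (2 * S N)%nat with (S (S (2 * N))) by lia.
  rewrite decomp_sum by lia. change (pred (S (S (2*N)))) with (S (2*N)).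
  rewrite tech5.
  rewrite (sum_eq (fun i => f (Z.of_nat (S i) - Z.of_nat (S N))%Z)
                  (fun n => f (Z.of_nat n - Z.of_nat N)%Z)).
  2:{ intros i _. f_equal. lia. }
  replace (Z.of_nat 0 - Z.of_nat (S N))%Z with (- Z.of_nat (S N))%Z by lia.
  replace (Z.of_nat (S (S (2 * N))) - Z.of_nat (S N))%Z with (Z.of_nat (S N)) by lia.
  ring.
Qed.

Lemma zpartial_ext f g N : (forall k, f k = g k) -> zpartial f N = zpartial g N.
Proof. intros H; unfold zpartial; apply sum_eq; intros; apply H. Qed.

Lemma zpartial_le f g N : (forall k, f k <= g k) -> zpartial f N <= zpartial g N.
Proof. intros H; unfold zpartial; apply sum_Rle; intros; apply H. Qed.

Lemma zpartial_plus f g N : zpartial (fun k => f k + g k) N = zpartial f N + zpartial g N.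
Proof. unfold zpartial; apply plus_sum. Qed.

Lemma zpartial_minus f g N : zpartial (fun k => f k - g k) N = zpartial f N - zpartial g N.
Proof. unfold zpartial; apply minus_sum. Qed.

Lemma zpartial_scal f c N : zpartial (fun k => c * f k) N = c * zpartial f N.
Proof. unfold zpartial; rewrite scal_sum; apply sum_eq; intros; ring. Qed.

Lemma zpartial_nonneg f N : (forall k, 0 <= f k) -> 0 <= zpartial f N.
Proof.
  intros H. induction N. unfold zpartial; simpl; apply H.
  rewrite zpartial_S. pose proof (H (Z.of_nat (S N))); pose proof (H (- Z.of_nat (S N))%Z). lra.
Qed.

Lemma zpartial_growing f : (forall k, 0 <= f k) -> Un_growing (zpartial f).
Proof.
  intros H n. rewrite zpartial_S.
  pose proof (H (Z.of_nat (S n))); pose proof (H (- Z.of_nat (S n))%Z). lra.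
Qed.

Lemma zpartial_mono f N N' : (forall k, 0 <= f k) -> (N <= N')%nat -> zpartial f N <= zpartial f N'.
Proof.
  intros H Hle. induction Hle. lra.
  pose proof (zpartial_growing f H m). lra.
Qed.

Lemma zpartial_support f M N : (forall k, (Z.of_nat M < Z.abs k)%Z -> f k = 0) -> (M <= N)%nat ->
  zpartial f N = zpartial f M.
Proof.
  intros H Hle. induction Hle. reflexivity.
  rewrite zpartial_S, IHHle. rewrite !H by lia. ring.
Qed.

Lemma has_zsum_le_of_nonneg f l N : (forall k, 0 <= f k) -> has_zsum f l -> zpartial f N <= l.
Proof. intros H Hs. apply growing_ineq; auto. apply zpartial_growing; auto. Qed.

Lemma has_zsum_nonneg_bounded f B : (forall k, 0 <= f k) -> (forall N, zpartial f N <= B) ->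
  exists l, has_zsum f l.
Proof.
  intros H HB. destruct (growing_cv (zpartial f)) as [l Hl].
  apply zpartial_growing; auto.
  exists B. intros x [N ->]. apply HB.
  exists l; exact Hl.
Qed.

Lemma has_zsum_dominated f nu : prob_measure_Z nu -> (forall k, Rabs (f k) <= nu k) ->
  exists l, has_zsum f l.
Proof.
  intros [Hnn Hs] Hd.
  assert (Hb : forall N, zpartial nu N <= 1) by (intros; apply has_zsum_le_of_nonneg; auto).
  destruct (has_zsum_nonneg_bounded (fun k => (Rabs (f k) + f k) / 2) 1) as [l1 H1].
  { intros k. pose proof (Rle_abs (- f k)) as Hr. rewrite Rabs_Ropp in Hr. lra. }
  { intros N. eapply Rle_trans. 2: apply (Hb N). apply zpartial_le. intros k.
    pose proof (Hd k). pose proof (Rle_abs (f k)). lra. }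
  destruct (has_zsum_nonneg_bounded (fun k => (Rabs (f k) - f k) / 2) 1) as [l2 H2].
  { intros k. pose proof (Rle_abs (f k)). lra. }
  { intros N. eapply Rle_trans. 2: apply (Hb N). apply zpartial_le. intros k.
    pose proof (Hd k). pose proof (Rle_abs (- f k)) as Hr. rewrite Rabs_Ropp in Hr. lra. }
  exists (l1 - l2). unfold has_zsum.
  eapply Un_cv_ext. 2: apply (CV_minus _ _ _ _ H1 H2).
  intros n. simpl. rewrite <- zpartial_minus. apply zpartial_ext. intros; field.
Qed.


Lemma cos_periodZ x z : cos (x + 2 * IZR z * PI) = cos x.
Proof.
  destruct (Z_le_gt_dec 0 z).
  - rewrite <- (Z2Nat.id z l). rewrite <- INR_IZR_INZ. apply cos_period.
  - set (w := (- z)%Z). assert (Hz : z = (- w)%Z) by (unfold w; lia).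
    rewrite <- (cos_period (x + 2 * IZR z * PI) (Z.to_nat w)).
    rewrite INR_IZR_INZ, Z2Nat.id by lia. rewrite Hz, opp_IZR. f_equal. ring.
Qed.

Lemma sin_lower v : 0 <= v -> v <= PI / 2 -> v / 3 <= sin v.
Proof.
  intros H0 H1. pose proof PI_4.
  assert (HP : 0 <= PI) by (pose proof PI_RGT_0; lra).
  destruct (SIN v H0 ltac:(lra)) as [Hl _].
  eapply Rle_trans. 2: exact Hl.
  unfold sin_lb, sin_approx, sin_term. simpl.
  assert (v <= 2) by lra.
  assert (v*v <= 4) by nra.
  assert (v*v*(v*v) <= 16) by nra.
  assert (0 <= v*v) by nra.
  assert (0 <= v * (v*v*(v*v))) by nra.
  assert (v * (v*v*(v*v)) * (v*v) <= v * (v*v*(v*v)) * 4) by nra.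
  assert (v*(v*v) <= 4 * v) by nra.
  field_simplify. nra.
Qed.

Lemma cos_far y e : 0 <= e -> (forall n:Z, e <= Rabs (y - IZR n)) -> 2 * e^2 <= 1 - cos (2*PI*y).
Proof.
  intros He Hf.
  set (z := (up (y + 1/2) - 1)%Z).
  destruct (archimed (y + 1/2)) as [A1 A2].
  assert (Hz : IZR z = IZR (up (y+1/2)) - 1) by (unfold z; rewrite minus_IZR; reflexivity).
  set (u := y - IZR z).
  assert (Hu1 : -(1/2) <= u) by (unfold u; lra).
  assert (Hu2 : u <= 1/2) by (unfold u; lra).
  assert (Heu : e <= Rabs u) by apply Hf.
  assert (Hc : cos (2*PI*y) = cos (2 * (PI * u))).
  { replace (2*PI*y) with (2*(PI*u) + 2 * IZR z * PI) by (unfold u; ring). apply cos_periodZ. }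
  rewrite Hc, cos_2a_sin.
  assert (Hs : sin (PI*u) * sin (PI*u) = sin (PI * Rabs u) * sin (PI * Rabs u)).
  { unfold Rabs; destruct (Rcase_abs u). replace (PI * - u) with (- (PI*u)) by ring.
    rewrite sin_neg; ring. reflexivity. }
  replace (1 - (1 - 2 * sin (PI*u) * sin (PI*u))) with (2 * (sin (PI*u) * sin (PI*u))) by ring.
  rewrite Hs.
  pose proof PI2_3_2. pose proof (Rabs_pos u).
  assert (Hau : Rabs u <= 1/2) by (apply Rabs_le; lra).
  pose proof (sin_lower (PI * Rabs u) ltac:(nra) ltac:(nra)).
  assert (Rabs u <= sin (PI * Rabs u)) by nra.
  nra.
Qed.


Definition Good (t eps : R) (d : Z) : Prop := exists n : Z, Rabs (IZR d * t - IZR n) < eps.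

Lemma good_mono t e e' d : e <= e' -> Good t e d -> Good t e' d.
Proof. intros H [n Hn]. exists n. lra. Qed.

Lemma good_opp t e d : Good t e d -> Good t e (- d).
Proof. intros [n Hn]. exists (- n)%Z. rewrite !opp_IZR.
  replace (- IZR d * t - - IZR n) with (- (IZR d * t - IZR n)) by ring. rewrite Rabs_Ropp. exact Hn. Qed.

Lemma good_comb t e1 e2 d b q : Good t e1 d -> Good t e2 b ->
  Good t (e1 + IZR (Z.abs q) * e2) (d - q * b).
Proof.
  intros [n1 H1] [n2 H2]. exists (n1 - q * n2)%Z.
  rewrite minus_IZR, mult_IZR, minus_IZR, mult_IZR.
  replace (((IZR d - IZR q * IZR b) * t - (IZR n1 - IZR q * IZR n2)))
    with ((IZR d * t - IZR n1) + (- IZR q) * (IZR b * t - IZR n2)) by ring.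
  eapply Rle_lt_trans. apply Rabs_triang. rewrite Rabs_mult, Rabs_Ropp, <- abs_IZR.
  pose proof (IZR_le 0 (Z.abs q) ltac:(lia)). pose proof (Rabs_pos (IZR b * t - IZR n2)).
  nra.
Qed.

Lemma pigeon (L : nat) (P : nat -> Z -> Prop) :
  (forall j d, P j d -> (1 <= d <= Z.of_nat L)%Z) ->
  exists j, (j <= L)%nat /\ ((forall d, ~ P j d) \/ exists b, P j b /\ forall d, P (S j) d -> (b <= d)%Z).
Proof.
  intros Hb. apply NNPP. intros Hn.
  assert (H : forall j, (j <= L)%nat -> (exists d, P j d) /\ forall b, P j b -> exists d, P (S j) d /\ (d < b)%Z).
  { intros j Hj. split.
    - apply NNPP; intros Hc. apply Hn. exists j. split; auto. left. intros d Hd. apply Hc. eauto.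
    - intros b Hbj. apply NNPP; intros Hc. apply Hn. exists j. split; auto. right. exists b. split; auto.
      intros d Hd. apply Z.nlt_ge. intros Hlt. apply Hc. eauto. }
  assert (H2 : forall j, (j <= L)%nat -> exists d, P j d /\ (d <= Z.of_nat L - Z.of_nat j)%Z).
  { induction j; intros Hj.
    - destruct (proj1 (H 0%nat Hj)) as [d Hd]. exists d. split; auto. specialize (Hb _ _ Hd). lia.
    - destruct IHj as [d [Hd Hdl]]. lia.
      destruct (proj2 (H j ltac:(lia)) d Hd) as [d' [Hd' Hlt]]. exists d'. split; auto. lia. }
  destruct (H2 L (le_n _)) as [d [Hd Hdl]]. specialize (Hb _ _ Hd). lia.
Qed.

Lemma divis t (L : Z) (eps : nat -> R) j b d :
  eps (S j) = IZR (L + 1) * eps j -> 0 <= eps j -> (1 <= b <= L)%Z -> Good t (eps j) b ->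
  (forall r, (1 <= r <= L)%Z -> Good t (eps (S j)) r -> (b <= r)%Z) ->
  (Z.abs d <= L)%Z -> Good t (eps j) d -> (b | d)%Z.
Proof.
  intros Heps He Hb Hgb Hmin Hd Hgd.
  pose proof (Z.div_mod d b ltac:(lia)) as Hdm.
  pose proof (Z.mod_pos_bound d b ltac:(lia)) as Hr.
  set (q := (d / b)%Z) in *. set (r := (d mod b)%Z) in *.
  assert (Hq : (Z.abs q <= L)%Z) by nia.
  destruct (Z.eq_dec r 0) as [E|E].
  - exists q. lia.
  - exfalso.
    pose proof (good_comb t (eps j) (eps j) d b q Hgd Hgb) as G.
    replace (d - q * b)%Z with r in G by lia.
    assert (G' : Good t (eps (S j)) r).
    { eapply good_mono. 2: exact G. rewrite Heps, plus_IZR.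
      pose proof (IZR_le _ _ Hq). nra. }
    specialize (Hmin r ltac:(lia) G'). lia.
Qed.


Lemma IZR_abs_ge1 d : d <> 0%Z -> 1 <= Rabs (IZR d).
Proof. intros H. rewrite <- abs_IZR. apply IZR_le. lia. Qed.

Lemma key_small (M : Z) t phi : (1 <= M)%Z -> Rabs t * (4 * IZR M) <= 1 ->
  exists b r, b <> 1%Z /\ b <> (-1)%Z /\ forall k, (Z.abs k <= M)%Z ->
    (b | k - r)%Z \/ forall n, (1/2) * Rabs t <= Rabs (IZR k * t - phi - IZR n).
Proof.
  intros HM Ht.
  destruct (classic (exists k0, (Z.abs k0 <= M)%Z /\ exists n, Rabs (IZR k0 * t - phi - IZR n) < (1/2) * Rabs t))
    as [[k0 [Hk0 [n0 Hn0]]] | Hno].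
  - exists 0%Z, k0. split; [lia|split;[lia|]]. intros k Hk.
    destruct (classic (exists n, Rabs (IZR k * t - phi - IZR n) < (1/2) * Rabs t)) as [[n Hn]|Hc].
    + left. destruct (Z.eq_dec k k0) as [->|Hne]. replace (k0-k0)%Z with 0%Z by lia. apply Z.divide_0_r.
      exfalso. set (d := (k - k0)%Z). set (m := (n - n0)%Z).
      assert (Hdm : Rabs (IZR d * t - IZR m) < Rabs t).
      { unfold d, m. rewrite !minus_IZR.
        replace ((IZR k - IZR k0) * t - (IZR n - IZR n0)) with
          ((IZR k * t - phi - IZR n) - (IZR k0 * t - phi - IZR n0)) by ring.
        eapply Rle_lt_trans. apply Rabs_triang. rewrite Rabs_Ropp. lra. }
      assert (Hd1 : 1 <= Rabs (IZR d)) by (apply IZR_abs_ge1; unfold d; lia).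
      assert (Hd2 : Rabs (IZR d) <= 2 * IZR M).
      { rewrite <- abs_IZR. replace 2 with (IZR 2) by reflexivity. rewrite <- mult_IZR. apply IZR_le. unfold d; lia. }
      pose proof (Rabs_pos t).
      destruct (Z.eq_dec m 0) as [Hm|Hm].
      * rewrite Hm in Hdm. rewrite Rminus_0_r, Rabs_mult in Hdm. nra.
      * pose proof (IZR_abs_ge1 m Hm).
        pose proof (Rabs_triang_inv (IZR m) (IZR d * t)).
        replace (IZR m - IZR d * t) with (- (IZR d * t - IZR m)) in H1 by ring.
        rewrite Rabs_Ropp, Rabs_mult in H1.
        assert (Rabs t <= 1/4) by (pose proof (IZR_le 1 M HM); nra).
        nra.
    + right. intros n. apply Rnot_lt_le. intros Hl. apply Hc. eauto.
  - exists 0%Z, 0%Z. split; [lia|split;[lia|]]. intros k Hk. right. intros n.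
    apply Rnot_lt_le. intros Hl. apply Hno. eauto.
Qed.


Lemma key_large (M : Z) : (1 <= M)%Z -> exists e1, 0 < e1 /\ forall t phi,
  1 <= Rabs t * (4 * IZR M) -> Rabs t <= 1/2 ->
  exists b r, b <> 1%Z /\ b <> (-1)%Z /\ forall k, (Z.abs k <= M)%Z ->
    (b | k - r)%Z \/ forall n, e1 * Rabs t <= Rabs (IZR k * t - phi - IZR n).
Proof.
  intros HM.
  set (L := (2 * M)%Z).
  set (A := IZR (L + 1)).
  pose proof (IZR_le 1 M HM) as HMr.
  assert (HA : 1 <= A) by (unfold A; apply IZR_le; unfold L; lia).
  set (LN := Z.to_nat L).
  assert (HLN : Z.of_nat LN = L) by (unfold LN; rewrite Z2Nat.id; unfold L; lia).
  set (eps0 := / (8 * IZR M * A ^ LN)).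
  assert (HAp : 1 <= A ^ LN) by (apply pow_R1_Rle; lra).
  assert (He0 : 0 < eps0) by (unfold eps0; apply Rinv_0_lt_compat; nra).
  exists eps0. split; auto. intros t phi Ht1 Ht2.
  set (eps := fun j : nat => eps0 * A ^ j).
  assert (Heps_S : forall j, eps (S j) = IZR (L + 1) * eps j) by (intros; unfold eps; simpl; fold A; ring).
  assert (Heps_pos : forall j, 0 <= eps j) by (intros; unfold eps; pose proof (pow_le A j); nra).
  assert (Heps_ge : forall j, eps0 <= eps j) by (intros; unfold eps; pose proof (pow_R1_Rle A j HA); nra).
  assert (Heps_le : forall j, (j <= LN)%nat -> eps j <= / (8 * IZR M)).
  { intros j Hj. unfold eps, eps0. pose proof (Rle_pow A j LN HA Hj).
    rewrite Rinv_mult.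
    assert (H1: / A^LN * A^j <= 1).
    { apply Rmult_le_reg_l with (A^LN). lra. rewrite <- Rmult_assoc, Rinv_r, Rmult_1_l, Rmult_1_r by lra. auto. }
    assert (0 < / (8 * IZR M)) by (apply Rinv_0_lt_compat; lra). rewrite Rmult_assoc. nra. }
  assert (Hfar1 : forall n : Z, / (4 * IZR M) <= Rabs (t - IZR n)).
  { intros n. destruct (Z.eq_dec n 0) as [->|Hn].
    - rewrite Rminus_0_r. apply Rmult_le_reg_r with (4 * IZR M). lra.
      rewrite Rinv_l by lra. lra.
    - pose proof (IZR_abs_ge1 n Hn). pose proof (Rabs_triang_inv (IZR n) t).
      replace (IZR n - t) with (- (t - IZR n)) in H0 by ring. rewrite Rabs_Ropp in H0.
      assert (/ (4 * IZR M) <= 1/4).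
      { apply Rmult_le_reg_r with (4 * IZR M). lra. rewrite Rinv_l by lra. lra. }
      lra. }
  set (P := fun j d => (1 <= d <= L)%Z /\ Good t (eps j) d).
  destruct (pigeon LN P) as [j [Hj Hcase]].
  { intros j d [Hd _]. lia. }
  set (eta := eps0 / 2).
  assert (Hclose : forall k k0 n n0, Rabs (IZR k * t - phi - IZR n) < eta ->
             Rabs (IZR k0 * t - phi - IZR n0) < eta -> Good t (eps j) (k - k0)).
  { intros k k0 n n0 H1 H2. apply good_mono with eps0; auto. exists (n - n0)%Z.
    rewrite !minus_IZR.
    replace ((IZR k - IZR k0) * t - (IZR n - IZR n0)) with
      ((IZR k * t - phi - IZR n) - (IZR k0 * t - phi - IZR n0)) by ring.
    eapply Rle_lt_trans. apply Rabs_triang. rewrite Rabs_Ropp. unfold eta in *. lra. }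
  assert (Hfar : forall k, ~ (exists n, Rabs (IZR k * t - phi - IZR n) < eta) ->
     forall n, eps0 * Rabs t <= Rabs (IZR k * t - phi - IZR n)).
  { intros k Hc n. apply Rle_trans with eta. unfold eta. pose proof (Rabs_pos t). nra.
    apply Rnot_lt_le. intros Hl. apply Hc. eauto. }
  destruct (classic (exists k0, (Z.abs k0 <= M)%Z /\ exists n, Rabs (IZR k0 * t - phi - IZR n) < eta))
    as [[k0 [Hk0 [n0 Hn0]]] | Hno].
  2:{ exists 0%Z, 0%Z. split; [lia|split;[lia|]]. intros k Hk. right. apply Hfar.
      intros [n Hn]. apply Hno. eauto. }
  destruct Hcase as [Hempty | [b [[Hb Hgb] Hmin]]].
  - exists 0%Z, k0. split; [lia|split;[lia|]]. intros k Hk.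
    destruct (classic (exists n, Rabs (IZR k * t - phi - IZR n) < eta)) as [[n Hn]|Hc].
    + left. pose proof (Hclose k k0 n n0 Hn Hn0) as G.
      destruct (Z_lt_le_dec 0 (k - k0)).
      { exfalso. apply (Hempty (k - k0)%Z). split; auto. unfold L; lia. }
      destruct (Z_lt_le_dec (k - k0) 0).
      { exfalso. apply (Hempty (- (k - k0))%Z). split. unfold L; lia. apply good_opp; auto. }
      replace (k - k0)%Z with 0%Z by lia. apply Z.divide_0_r.
    + right. apply Hfar. exact Hc.
  - exists b, k0. split; [|split; [lia|]].
    { intros ->. destruct Hgb as [n Hn]. specialize (Hfar1 n). rewrite Rmult_1_l in Hn.
      specialize (Heps_le j Hj).
      assert (/ (8 * IZR M) < / (4 * IZR M)) by (apply Rinv_lt_contravar; nra). lra. }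
    intros k Hk.
    destruct (classic (exists n, Rabs (IZR k * t - phi - IZR n) < eta)) as [[n Hn]|Hc].
    + left. apply (divis t L eps j b (k - k0)); auto.
      intros r Hr Hg. apply Hmin. split; auto.
      unfold L; lia.
      apply (Hclose k k0 n n0 Hn Hn0).
    + right. apply Hfar. exact Hc.
Qed.

Lemma key (M : Z) : (1 <= M)%Z -> exists e1, 0 < e1 /\ forall t phi, Rabs t <= 1/2 ->
  exists b r, b <> 1%Z /\ b <> (-1)%Z /\ forall k, (Z.abs k <= M)%Z ->
    (b | k - r)%Z \/ forall n, e1 * Rabs t <= Rabs (IZR k * t - phi - IZR n).
Proof.
  intros HM. destruct (key_large M HM) as [e [He H]].
  exists (Rmin e (1/2)). split. apply Rmin_glb_lt; lra.
  intros t phi Ht. pose proof (Rabs_pos t).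
  assert (Hm1 : Rmin e (1/2) * Rabs t <= e * Rabs t) by (pose proof (Rmin_l e (1/2)); nra).
  assert (Hm2 : Rmin e (1/2) * Rabs t <= 1/2 * Rabs t) by (pose proof (Rmin_r e (1/2)); nra).
  destruct (Rle_lt_dec 1 (Rabs t * (4 * IZR M))) as [Hl|Hl].
  - destruct (H t phi Hl Ht) as [b [r [H1 [H2 H3]]]]. exists b, r. repeat split; auto.
    intros k Hk. destruct (H3 k Hk) as [?|Hf]; auto. right. intros n. specialize (Hf n). lra.
  - destruct (key_small M t phi HM ltac:(lra)) as [b [r [H1 [H2 H3]]]]. exists b, r. repeat split; auto.
    intros k Hk. destruct (H3 k Hk) as [?|Hf]; auto. right. intros n. specialize (Hf n). lra.
Qed.


Lemma angle c s : c^2 + s^2 = 1 -> exists th, cos th = c /\ sin th = s.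
Proof.
  intros H. assert (Hc : -1 <= c <= 1) by (split; nra).
  assert (Hs : sqrt (1 - c²) = Rabs s).
  { replace (1 - c²) with (s²) by (unfold Rsqr; nra). apply sqrt_Rsqr_abs. }
  destruct (Rle_lt_dec 0 s).
  - exists (acos c). split. apply cos_acos; auto. rewrite sin_acos by auto. rewrite Hs. apply Rabs_pos_eq; auto.
  - exists (- acos c). split. rewrite cos_neg. apply cos_acos; auto.
    rewrite sin_neg, sin_acos by auto. rewrite Hs, Rabs_left; auto. ring.
Qed.

Lemma cv_const c : Un_cv (fun _ => c) c.
Proof. intros e He. exists 0%nat. intros. unfold Rdist. rewrite Rminus_diag, Rabs_R0. auto. Qed.

Lemma has_zsum_lin f g c l1 l2 : has_zsum f l1 -> has_zsum g l2 ->
  has_zsum (fun k => f k - c * g k) (l1 - c * l2).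
Proof.
  intros H1 H2. unfold has_zsum.
  eapply Un_cv_ext. 2: apply (CV_minus _ _ _ _ H1 (CV_mult _ _ _ _ (cv_const c) H2)).
  intros n. simpl. rewrite zpartial_minus, zpartial_scal. reflexivity.
Qed.


Definition nuM (nu : Z -> R) (M : nat) : Z -> R :=
  fun k => if (Z.abs k <=? Z.of_nat M)%Z then nu k else 0.

Lemma markov nu M m1 : prob_measure_Z nu -> first_moment nu m1 ->
  INR M + 1 <= m1 + (INR M + 1) * zpartial (nuM nu M) M.
Proof.
  intros [Hnn Hs] Hm.
  assert (HnM : forall k, 0 <= nuM nu M k) by (intros k; unfold nuM; destruct (_ <=? _)%Z; auto; lra).
  assert (Hf : forall k, 0 <= Rabs (IZR k) * nu k) by (intros; pose proof (Rabs_pos (IZR k)); pose proof (Hnn k); nra).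
  apply Rle_cv_lim with (Un := fun N => (INR M + 1) * zpartial nu N) (Vn := fun _ => m1 + (INR M + 1) * zpartial (nuM nu M) M).
  - intros N.
    assert (Hpt : forall k, (INR M + 1) * nu k <= Rabs (IZR k) * nu k + (INR M + 1) * nuM nu M k).
    { intros k. unfold nuM. destruct (Z.leb_spec (Z.abs k) (Z.of_nat M)).
      - pose proof (Hf k). lra.
      - assert (INR M + 1 <= Rabs (IZR k)).
        { rewrite <- abs_IZR, INR_IZR_INZ. replace 1 with (IZR 1) by reflexivity. rewrite <- plus_IZR.
          apply IZR_le. lia. }
        pose proof (Hnn k). nra. }
    rewrite <- zpartial_scal. eapply Rle_trans. apply (zpartial_le _ _ N Hpt).
    rewrite zpartial_plus, zpartial_scal.
    pose proof (has_zsum_le_of_nonneg _ m1 N Hf Hm).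
    assert (zpartial (nuM nu M) N <= zpartial (nuM nu M) M).
    { destruct (le_lt_dec M N).
      - rewrite (zpartial_support _ M N); [lra| |auto].
        intros k Hk. unfold nuM. destruct (Z.leb_spec (Z.abs k) (Z.of_nat M)); [lia|auto].
      - apply zpartial_mono; auto. lia. }
    pose proof (pos_INR M). nra.
  - assert (Hc := CV_mult _ _ _ _ (cv_const (INR M + 1)) Hs). rewrite Rmult_1_r in Hc. exact Hc.
  - apply cv_const.
Qed.

Theorem theorem3p3 (a rho : R) (ha : 0 < a) (hrho0 : 0 <= rho) (hrho1 : rho < 1) :
  exists c : R, 0 < c /\
    forall nu : Z -> R,
      prob_measure_Z nu ->
      (exists m1, first_moment nu m1 /\ m1 <= a) ->
      (forall (beta r : Z), beta <> 1%Z -> beta <> (-1)%Z ->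
         forall m, coset_mass nu beta r m -> m <= rho) ->
      forall t : R, -(1/2) < t -> t <= 1/2 ->
        exists re im : R,
          has_zsum (fourier_re nu t) re /\ has_zsum (fourier_im nu t) im /\
          sqrt (re ^ 2 + im ^ 2) <= exp (- (c * t ^ 2)).
Proof.
  set (z := up (2 * a / (1 - rho))).
  destruct (archimed (2 * a / (1 - rho))) as [Hz _]. fold z in Hz.
  set (M := Z.to_nat (Z.max 1 z)).
  assert (HMz : Z.of_nat M = Z.max 1 z) by (unfold M; rewrite Z2Nat.id; lia).
  assert (HM1 : (1 <= Z.of_nat M)%Z) by lia.
  assert (HMr : 2 * a / (1 - rho) < INR M).
  { rewrite INR_IZR_INZ, HMz. eapply Rlt_le_trans. exact Hz. apply IZR_le. lia. }
  assert (HMa : a <= (1 - rho) / 2 * (INR M + 1)).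
  { assert (2 * a < (1 - rho) * INR M).
    { apply Rmult_lt_compat_l with (r := 1 - rho) in HMr; [|lra].
      replace ((1 - rho) * (2 * a / (1 - rho))) with (2 * a) in HMr by (field; lra). lra. }
    pose proof (pos_INR M). nra. }
  destruct (key (Z.of_nat M) HM1) as [e1 [He1 Hkey]].
  exists (e1 ^ 2 * (1 - rho)). split. { pose proof (pow_lt e1 2 He1). nra. }
  intros nu Hprob [m1 [Hm1 Hm1a]] Hcos t Ht1 Ht2.
  pose proof Hprob as [Hnn Hsum].
  destruct (has_zsum_dominated (fourier_re nu t) nu Hprob) as [re Hre].
  { intros k. unfold fourier_re. rewrite Rabs_mult, (Rabs_pos_eq (nu k)) by auto.
    pose proof (Hnn k). assert (Rabs (cos (2 * PI * IZR k * t)) <= 1) by (apply Rabs_le; apply COS_bound). nra. }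
  destruct (has_zsum_dominated (fourier_im nu t) nu Hprob) as [im Him].
  { intros k. unfold fourier_im. rewrite Rabs_mult, (Rabs_pos_eq (nu k)) by auto.
    pose proof (Hnn k). assert (Rabs (sin (2 * PI * IZR k * t)) <= 1) by (apply Rabs_le; apply SIN_bound). nra. }
  exists re, im. split; auto. split; auto.
  set (R0 := sqrt (re ^ 2 + im ^ 2)).
  assert (HR0 : 0 <= R0) by apply sqrt_pos.
  destruct (Req_dec R0 0) as [E|HRne].
  { rewrite E. left. apply exp_pos. }
  assert (HRp : 0 < R0) by lra.
  assert (HR2 : R0 * R0 = re ^ 2 + im ^ 2).
  { unfold R0. apply sqrt_sqrt. nra. }
  destruct (angle (re / R0) (im / R0)) as [th [Hcth Hsth]].
  { field_simplify; [|lra]. replace (R0 ^ 2) with (R0 * R0) by ring. rewrite HR2. field. nra. }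
  set (phi := th / (2 * PI)).
  assert (HPI : 0 < PI) by apply PI_RGT_0.
  assert (Htabs : Rabs t <= 1/2) by (apply Rabs_le; lra).
  destruct (Hkey t phi Htabs) as [b [r [Hb1 [Hb2 Hbk]]]].
  set (h := fun k => nu k * (1 - cos (2 * PI * (IZR k * t - phi)))).
  assert (Hh_eq : forall k, h k = (fun k => (fun k => nu k - cos th * fourier_re nu t k) k - sin th * fourier_im nu t k) k).
  { intros k. unfold h, fourier_re, fourier_im.
    replace (2 * PI * (IZR k * t - phi)) with (2 * PI * IZR k * t - th) by (unfold phi; field; lra).
    rewrite cos_minus. ring. }
  assert (Hhs : has_zsum h (1 - cos th * re - sin th * im)).
  { unfold has_zsum. eapply Un_cv_ext. intros n. symmetry. apply zpartial_ext. exact Hh_eq.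
    apply has_zsum_lin; auto. apply has_zsum_lin; auto. }
  assert (Hval : cos th * re + sin th * im = R0).
  { rewrite Hcth, Hsth. apply Rmult_eq_reg_l with R0; [|lra]. field_simplify; [|lra].
    replace (R0 ^ 2) with (R0 * R0) by ring. rewrite HR2. ring. }
  assert (Hhnn : forall k, 0 <= h k).
  { intros k. unfold h. pose proof (COS_bound (2 * PI * (IZR k * t - phi))). pose proof (Hnn k). nra. }
  assert (HhM : zpartial h M <= 1 - R0).
  { rewrite <- Hval. replace (1 - (cos th * re + sin th * im)) with (1 - cos th * re - sin th * im) by ring.
    apply has_zsum_le_of_nonneg; auto. }
  set (cr := coset_restrict nu b r).
  assert (Hcrnn : forall k, 0 <= cr k) by (intros; unfold cr, coset_restrict; destruct Zdivide_dec; auto; lra).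
  destruct (has_zsum_nonneg_bounded cr 1 Hcrnn) as [mc Hmc].
  { intros N. apply Rle_trans with (zpartial nu N).
    apply zpartial_le. intros k. unfold cr, coset_restrict; destruct Zdivide_dec; auto; lra.
    apply has_zsum_le_of_nonneg; auto. }
  pose proof (Hcos b r Hb1 Hb2 mc Hmc) as Hmcr.
  pose proof (has_zsum_le_of_nonneg cr mc M Hcrnn Hmc) as HcrM.
  pose proof (markov nu M m1 Hprob Hm1) as Hmk.
  set (d := 2 * (e1 * Rabs t) ^ 2).
  assert (Hd0 : 0 <= d) by (unfold d; pose proof (pow2_ge_0 (e1 * Rabs t)); lra).
  assert (Hpt : forall k, d * nuM nu M k - d * cr k <= h k).
  { intros k. unfold nuM. destruct (Z.leb_spec (Z.abs k) (Z.of_nat M)) as [Hk|Hk].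
    - destruct (Hbk k Hk) as [Hdv | Hfar].
      + unfold cr, coset_restrict. destruct Zdivide_dec; [|contradiction]. pose proof (Hhnn k). lra.
      + pose proof (cos_far (IZR k * t - phi) (e1 * Rabs t)) as Hc.
        assert (0 <= e1 * Rabs t) by (pose proof (Rabs_pos t); nra).
        specialize (Hc H (fun n => Hfar n)). fold d in Hc.
        unfold h. pose proof (Hnn k). pose proof (Hcrnn k). nra.
    - pose proof (Hhnn k). pose proof (Hcrnn k). nra. }
  pose proof (zpartial_le _ _ M Hpt) as Hsum2.
  rewrite zpartial_minus, !zpartial_scal in Hsum2.
  assert (HnM : 1 - (1 - rho) / 2 <= zpartial (nuM nu M) M).
  { pose proof (pos_INR M).
    apply Rmult_le_reg_l with (INR M + 1). lra. nra. }
  assert (Hfin : R0 <= 1 - e1 ^ 2 * (1 - rho) * t ^ 2).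
  { assert (Ed : d = 2 * e1 ^ 2 * t ^ 2) by (unfold d; rewrite Rpow_mult_distr, pow2_abs; ring).
    rewrite Ed in Hsum2. pose proof (pow2_ge_0 t). pose proof (pow2_ge_0 e1).
    assert (0 <= e1 ^ 2 * t ^ 2) by nra.
    assert (HX : (1 - rho) / 2 <= zpartial (nuM nu M) M - zpartial cr M) by lra.
    assert (HY : e1 ^ 2 * t ^ 2 * ((1 - rho) / 2) <= e1 ^ 2 * t ^ 2 * (zpartial (nuM nu M) M - zpartial cr M))
      by (apply Rmult_le_compat_l; auto).
    nra. }
  eapply Rle_trans. exact Hfin.
  replace (1 - e1 ^ 2 * (1 - rho) * t ^ 2) with (1 + - (e1 ^ 2 * (1 - rho) * t ^ 2)) by ring.
  apply exp_ineq1_le.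
Qed.
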